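(* Let $\mathbf{X}=\{\mathbf{x}\in\mathbb{R}^n:g_1(\mathbf{x})\ge0,\dots,g_m(\mathbf{x})\ge0\}$ be compact, with $g_j\in\mathbb{R}[\mathbf{x}]$, and let $p_1,\dots,p_t,q_1,\dots,q_t\in\mathbb{R}[\mathbf{x}]$ with each $q_i$ positive on $\mathbf{X}$. Let $f_{\min}=\inf_{\mathbf{x}\in\mathbf{X}}\sum_{i=1}^t p_i(\mathbf{x})/q_i(\mathbf{x})$ and $$f_{\mathrm{meas}}=\inf_{\mu_1,\dots,\mu_t\in\mathscr{M}_+(\mathbf{X})}\Big\{\sum_{i=1}^t\int_{\mathbf{X}}p_i\,\mathrm{d}\mu_i:\ \int_{\mathbf{X}}\mathbf{x}^{\alpha}q_i\,\mathrm{d}\mu_i=\int_{\mathbf{X}}\mathbf{x}^{\alpha}q_1\,\mathrm{d}\mu_1\ \ (\alpha\in\mathbb{N}^n,\ i=2,\dots,t),\ \int_{\mathbf{X}}q_1\,\mathrm{d}\mu_1=1\Big\}.$$ Then $f_{\mathrm{meas}}=f_{\min}$.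
   Context: $\mathscr{M}_+(\mathbf{X})$ denotes the cone of finite nonnegative Borel measures supported on $\mathbf{X}$; $\mathbf{x}^\alpha=x_1^{\alpha_1}\cdots x_n^{\alpha_n}$. *)

(* Defs.v *)
From HB Require Import structures.
From mathcomp Require Import all_boot all_order all_algebra.
From mathcomp Require Import all_classical all_reals all_analysis.
From mathcomp Require multinomials.mpoly.
Set Implicit Arguments.
Unset Strict Implicit.
Unset Printing Implicit Defensive.
Import Order.TTheory GRing.Theory Num.Theory.
Import numFieldTopology.Exports numFieldNormedType.Exports.
Local Open Scope classical_set_scope.
Local Open Scope ring_scope.

(* Points of R^n are n-tuples; n.-tuple R carries the product (= Borel)
   sigma-algebra of mathcomp-analysis. *)

Definition rpoly (R : realType) (n : nat) := multinomials.mpoly.mpoly n R.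

Definition evalp (R : realType) (n : nat) (p : rpoly R n) (x : n.-tuple R) : R :=
  multinomials.mpoly.meval (fun i => tnth x i) p.

Definition monom (R : realType) (n : nat) (alpha : 'I_n -> nat) (x : n.-tuple R) : R :=
  \prod_(i < n) tnth x i ^+ alpha i.

Definition semialg (R : realType) (n m : nat) (g : 'I_m -> rpoly R n) :
  set (n.-tuple R) := [set x | forall j : 'I_m, 0 <= evalp (g j) x].

(* Identification of n-tuples with row vectors of 'rV[R]_n, used to speak
   about the (Euclidean) topology of R^n. *)
Definition row_of_tuple (R : realType) (n : nat) (x : n.-tuple R) : 'rV[R]_n :=
  \row_i tnth x i.

(* Main.v *)
Require Import Defs.
From HB Require Import structures.
From mathcomp Require Import all_boot all_order all_algebra.
From mathcomp Require Import all_classical all_reals all_analysis.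
From mathcomp Require multinomials.mpoly.
From mathcomp Require Import measurable_realfun.
From mathcomp Require Import ring lra.
Import Order.TTheory GRing.Theory Num.Theory.
Import numFieldTopology.Exports numFieldNormedType.Exports.
Canonical multinomials.mpoly.mpoly_meval__canonical__Algebra_Additive.
Canonical multinomials.mpoly.mpoly_meval__canonical__GRing_LRMorphism.
Canonical multinomials.mpoly.mpoly_meval__canonical__GRing_Linear.
Canonical multinomials.mpoly.mpoly_meval__canonical__GRing_RMorphism.
Canonical multinomials.mpoly.mpoly_mpolyC__canonical__Algebra_Additive.
Canonical multinomials.mpoly.mpoly_mpolyC__canonical__GRing_RMorphism.
Canonical multinomials.mpoly.mpoly_mpoly__canonical__Algebra_AddMagma.
Canonical multinomials.mpoly.mpoly_mpoly__canonical__Algebra_AddSemigroup.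
Canonical multinomials.mpoly.mpoly_mpoly__canonical__Algebra_AddUMagma.
Canonical multinomials.mpoly.mpoly_mpoly__canonical__Algebra_BaseAddMagma.
Canonical multinomials.mpoly.mpoly_mpoly__canonical__Algebra_BaseAddUMagma.
Canonical multinomials.mpoly.mpoly_mpoly__canonical__Algebra_BaseZmodule.
Canonical multinomials.mpoly.mpoly_mpoly__canonical__Algebra_ChoiceBaseAddMagma.
Canonical multinomials.mpoly.mpoly_mpoly__canonical__Algebra_ChoiceBaseAddUMagma.
Canonical multinomials.mpoly.mpoly_mpoly__canonical__Algebra_Nmodule.
Canonical multinomials.mpoly.mpoly_mpoly__canonical__Algebra_Zmodule.
Canonical multinomials.mpoly.mpoly_mpoly__canonical__GRing_Algebra.
Canonical multinomials.mpoly.mpoly_mpoly__canonical__GRing_ComAlgebra.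
Canonical multinomials.mpoly.mpoly_mpoly__canonical__GRing_ComNzRing.
Canonical multinomials.mpoly.mpoly_mpoly__canonical__GRing_ComNzSemiRing.
Canonical multinomials.mpoly.mpoly_mpoly__canonical__GRing_ComPzRing.
Canonical multinomials.mpoly.mpoly_mpoly__canonical__GRing_ComPzSemiRing.
Canonical multinomials.mpoly.mpoly_mpoly__canonical__GRing_ComSemiAlgebra.
Canonical multinomials.mpoly.mpoly_mpoly__canonical__GRing_ComUnitAlgebra.
Canonical multinomials.mpoly.mpoly_mpoly__canonical__GRing_ComUnitRing.
Canonical multinomials.mpoly.mpoly_mpoly__canonical__GRing_IntegralDomain.
Canonical multinomials.mpoly.mpoly_mpoly__canonical__GRing_LSemiAlgebra.
Canonical multinomials.mpoly.mpoly_mpoly__canonical__GRing_LSemiModule.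
Canonical multinomials.mpoly.mpoly_mpoly__canonical__GRing_Lalgebra.
Canonical multinomials.mpoly.mpoly_mpoly__canonical__GRing_Lmodule.
Canonical multinomials.mpoly.mpoly_mpoly__canonical__GRing_NzRing.
Canonical multinomials.mpoly.mpoly_mpoly__canonical__GRing_NzSemiRing.
Canonical multinomials.mpoly.mpoly_mpoly__canonical__GRing_PzRing.
Canonical multinomials.mpoly.mpoly_mpoly__canonical__GRing_PzSemiRing.
Canonical multinomials.mpoly.mpoly_mpoly__canonical__GRing_SemiAlgebra.
Canonical multinomials.mpoly.mpoly_mpoly__canonical__GRing_UnitAlgebra.
Canonical multinomials.mpoly.mpoly_mpoly__canonical__GRing_UnitRing.
Canonical multinomials.mpoly.mpoly_mpoly__canonical__choice_Choice.
Canonical multinomials.mpoly.mpoly_mpoly__canonical__choice_SubChoice.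
Canonical multinomials.mpoly.mpoly_mpoly__canonical__eqtype_Equality.
Canonical multinomials.mpoly.mpoly_mpoly__canonical__eqtype_SubEquality.
Canonical multinomials.mpoly.mpoly_mpoly__canonical__eqtype_SubType.
Local Open Scope classical_set_scope.
Local Open Scope ring_scope.

Section A.
Context (R : realType) (n : nat).
Local Notation T := (n.-tuple R).
Local Notation MP := (multinomials.mpoly.mpoly n R).

Lemma evalpE (P : rpoly R n) (x : T) :
  evalp P x = \sum_(m <- multinomials.mpoly.msupp P)
     multinomials.mpoly.mcoeff m P * monom (fun i => multinomials.mpoly.fun_of_multinom m i) x.
Proof. by rewrite /evalp multinomials.mpoly.mevalE. Qed.

Lemma evalpM (P Q : MP) x : evalp (P * Q) x = evalp P x * evalp Q x.
Proof. by rewrite /evalp multinomials.mpoly.mevalM. Qed.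

Lemma measurable_evalp (P : rpoly R n) : measurable_fun setT (evalp P).
Proof.
rewrite (_ : evalp P = fun x => \sum_(m <- multinomials.mpoly.msupp P)
     multinomials.mpoly.mcoeff m P * monom (fun i => multinomials.mpoly.fun_of_multinom m i) x); last first.
  by apply/funext => x; rewrite evalpE.
apply: measurable_sum => m.
apply: measurable_funM; first exact: measurable_cst.
apply: measurable_prod => i _.
apply: measurable_funX; exact: measurable_tnth.
Qed.

Lemma measurable_semialg m (g : 'I_m -> rpoly R n) : measurable (semialg g).
Proof.
rewrite (_ : semialg g = \bigcap_(j in [set: 'I_m]) (evalp (g j) @^-1` `[0, +oo[)).
  apply: fin_bigcap_measurable => // j _.
  rewrite -[X in measurable X]setTI.
  by apply: measurable_evalp => //; exact: measurable_itv.
apply/seteqP; split => x /=.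
  by move=> H j _ /=; rewrite in_itv /= andbT; exact: H.
by move=> H j; have := H j I; rewrite /= in_itv /= andbT.
Qed.


Definition prow (P : MP) (v : 'rV[R]_n) : R :=
  multinomials.mpoly.meval (fun i => v ord0 i) P.

Lemma cont_bigsum (I : Type) (s : seq I) (F : I -> 'rV[R]_n -> R) :
  (forall i, continuous (F i)) -> continuous (fun v => \sum_(i <- s) F i v).
Proof.
move=> HF; elim: s => [|a s IH].
  rewrite (_ : (fun v => _) = cst 0); first exact: cst_continuous.
  by apply/funext => v; rewrite big_nil.
rewrite (_ : (fun v => _) = (fun v => F a v + \sum_(i <- s) F i v)); last first.
  by apply/funext => v; rewrite big_cons.
move=> v.
exact: (@continuousD _ _ _ (F a) (fun v => \sum_(i <- s) F i v) v (HF a v) (IH v)).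
Qed.

Lemma cont_bigprod (I : Type) (s : seq I) (F : I -> 'rV[R]_n -> R) :
  (forall i, continuous (F i)) -> continuous (fun v => \prod_(i <- s) F i v).
Proof.
move=> HF; elim: s => [|a s IH].
  rewrite (_ : (fun v => _) = cst 1); first exact: cst_continuous.
  by apply/funext => v; rewrite big_nil.
rewrite (_ : (fun v => _) = (fun v => F a v * \prod_(i <- s) F i v)); last first.
  by apply/funext => v; rewrite big_cons.
move=> v.
exact: (@continuousM _ _ (F a) (fun v => \prod_(i <- s) F i v) v (HF a v) (IH v)).
Qed.

Lemma cont_expr (F : 'rV[R]_n -> R) k :
  continuous F -> continuous (fun v => F v ^+ k).
Proof.
move=> HF; elim: k => [|k IH].
  rewrite (_ : (fun v => _) = cst 1); first exact: cst_continuous.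
  by apply/funext => v; rewrite expr0.
rewrite (_ : (fun v => _) = (fun v => F v * F v ^+ k)); last first.
  by apply/funext => v; rewrite exprS.
move=> v.
exact: (@continuousM _ _ F (fun v => F v ^+ k) v (HF v) (IH v)).
Qed.

Lemma prow_cont (P : MP) : continuous (prow P).
Proof.
rewrite /prow (_ : (fun v => _) = (fun v : 'rV[R]_n => \sum_(m <- multinomials.mpoly.msupp P)
   multinomials.mpoly.mcoeff m P * \prod_(i < n) v ord0 i ^+ multinomials.mpoly.fun_of_multinom m i)); last first.
  by apply/funext => v; rewrite multinomials.mpoly.mevalE.
apply: cont_bigsum => m.
move=> v.
apply: (@continuousM _ _ (cst (multinomials.mpoly.mcoeff m P))); first exact: cst_continuous.
apply: cont_bigprod => i.
apply: cont_expr.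
exact: coord_continuous.
Qed.

Lemma row_prow (P : MP) (x : T) : prow P (row_of_tuple x) = evalp P x.
Proof. by rewrite /prow /evalp; apply: multinomials.mpoly.meval_eq => i; rewrite /row_of_tuple mxE. Qed.

Lemma bound_within (X : set T) (f : 'rV[R]_n -> R) :
  compact (@row_of_tuple R n @` X) ->
  {within (@row_of_tuple R n @` X), continuous f} ->
  exists M, forall x, X x -> `|f (row_of_tuple x)| <= M.
Proof.
move=> cK fc.
have := compact_bounded (continuous_compact fc cK).
case=> M0 [_ HM]; exists (M0 + 1) => x Xx.
apply: (HM (M0 + 1)); first by rewrite ltrDl.
by exists (row_of_tuple x) => //; exists x.
Qed.

Lemma bound_poly (X : set T) (P : MP) :
  compact (@row_of_tuple R n @` X) ->
  exists M, forall x, X x -> `|evalp P x| <= M.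
Proof.
move=> cK.
have fc : {within (@row_of_tuple R n @` X), continuous (prow P)}.
  by apply: continuous_subspaceT; exact: prow_cont.
have [M HM] := @bound_within X (prow P) cK fc.
by exists M => x Xx; rewrite -row_prow; exact: HM.
Qed.

Lemma lbound_poly (X : set T) (Q : MP) :
  compact (@row_of_tuple R n @` X) ->
  (forall x, X x -> 0 < evalp Q x) ->
  exists a, 0 < a /\ forall x, X x -> a <= evalp Q x.
Proof.
move=> cK Qpos.
have fc : {within (@row_of_tuple R n @` X), continuous (fun v => (prow Q v)^-1)}.
  apply: continuous_in_subspaceT => v /set_mem [x Xx <-].
  apply: continuousV; first by rewrite row_prow gt_eqF // Qpos.
  exact: prow_cont.
have [M HM] := @bound_within X _ cK fc.
exists (`|M| + 1)^-1; split; first by rewrite invr_gt0 ltr_pwDr // normr_ge0.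
move=> x Xx; have := HM x Xx; rewrite row_prow => H.
have q0 := Qpos x Xx.
rewrite -[evalp Q x]invrK lef_pV2 ?posrE ?invr_gt0 ?ltr_pwDr //.
have h1 := ler_norm M; have h2 := ler_norm ((evalp Q x)^-1).
apply: (le_trans h2); apply: (le_trans H); apply: (le_trans h1).
by rewrite lerDl.
Qed.

Lemma limit_arg (s c K rho : R) : 0 <= rho -> rho < 1 ->
  (forall N, c - K * rho ^+ N <= s) -> c <= s.
Proof.
move=> r0 r1 H; rewrite leNgt; apply/negP => sc.
have [K0|K0] := leP K 0.
  by have := H 0%N; rewrite expr0 mulr1; lra.
have d0 : 0 < (c - s) / K by rewrite divr_gt0 // subr_gt0.
have hr : `|rho| < 1 by rewrite ger0_norm.
have := cvgr_dist_lt _ _ (cvg_expr hr) _ d0.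
case=> N _ HN.
have := HN N (leqnn N); rewrite sub0r normrN ger0_norm ?exprn_ge0 // => hN.
have := H N.
have : K * rho ^+ N < c - s by rewrite -ltr_pdivlMl // mulrC.
lra.
Qed.

Lemma approx_pt (P Q a b M : R) N : 0 < a -> a <= Q -> Q <= b -> `|P| <= M ->
  let e := M * (1 - b^-1 * a) ^+ N / a in
  let h := b^-1 * P * \sum_(k < N) (1 - b^-1 * Q) ^+ k - e in
  h * Q <= P /\ P / Q - 2 * e <= h.
Proof.
move=> a0 aQ Qb PM e h.
have Q0 : 0 < Q by apply: lt_le_trans aQ.
have b0 : 0 < b by apply: lt_le_trans Qb.
set r := 1 - b^-1 * Q; set rho := 1 - b^-1 * a.
have bQ1 : b^-1 * Q <= 1 by rewrite mulrC ler_pdivrMr // mul1r.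
have baQ : b^-1 * a <= b^-1 * Q by rewrite ler_pM2l // invr_gt0.
have r0 : 0 <= r by rewrite /r subr_ge0.
have rrho : r <= rho by rewrite /rho /r lerB.
set S := \sum_(k < N) r ^+ k.
have F1 : b^-1 * Q * S = 1 - r ^+ N.
  have := subrX1 r N; rewrite -/S => E.
  by rewrite -opprB E -mulNr opprB /r; congr (_ * _); ring.
set u := r ^+ N; set v := rho ^+ N.
have u0 : 0 <= u by rewrite exprn_ge0.
have uv : u <= v by rewrite lerXn2r // ?nnegrE // (le_trans r0 rrho).
have M0 : 0 <= M by apply: le_trans PM.
have ea : e * a = M * v by rewrite /e -/rho -/v mulfVK // gt_eqF.
have rho0 : 0 <= rho by apply: le_trans rrho.
have e0 : 0 <= e.
  by rewrite /e -/rho divr_ge0 ?mulr_ge0 ?exprn_ge0 // ltW.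
have f1 : - (P * u) <= M * v.
  have := ler_norm (- (P * u)); rewrite normrN normrM (ger0_norm u0) => h1.
  apply: (le_trans h1); exact: ler_pM.
have f2 : e * a <= e * Q by rewrite ler_wpM2l.
have hE : h = P / Q * (1 - u) - e.
  rewrite /h -/r -/S -F1; congr (_ - _); field; by rewrite (gt_eqF Q0) (gt_eqF b0).
split.
  have -> : h * Q = P * (1 - u) - e * Q.
    rewrite hE; field; by rewrite (gt_eqF Q0).
  lra.
have f3 : P / Q * u <= e.
  have h1 : P / Q * u <= `|P| / Q * u.
    apply: ler_wpM2r => //; apply: ler_wpM2r; [by rewrite invr_ge0 ltW | exact: ler_norm].
  apply: (le_trans h1).
  have h2 : `|P| / Q <= M / a.
    apply: (@le_trans _ _ (M / Q)); first by rewrite ler_wpM2r // invr_ge0 ltW.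
    by rewrite ler_wpM2l // lef_pV2.
  have : `|P| / Q * u <= M / a * v.
    by apply: ler_pM => //; rewrite divr_ge0 // ltW.
  by move=> h3; apply: (le_trans h3); rewrite /e -/rho -/v mulrAC.
have E2 : P / Q * (1 - u) = P / Q - P / Q * u by ring.
have : P / Q * (1 - u) - e >= P / Q - 2 * e by lra.
by rewrite -hE.
Qed.

Lemma int_scale_dirac (w : {nonneg R}) (x : T) (D : set T) (f : T -> R) :
  measurable D -> D x -> measurable_fun D f ->
  (\int[mscale w \d_x]_(y in D) (f y)%:E = (w%:num * f x)%:E)%E.
Proof.
move=> mD Dx mf.
have mf' : measurable_fun D (EFin \o f) by exact/measurable_EFinP.
rewrite integralE.
rewrite (ge0_integral_mscale _ mD); last 2 first.
  exact: measurable_funepos.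
  by move=> y _; exact: funepos_ge0.
rewrite (ge0_integral_mscale _ mD); last 2 first.
  exact: measurable_funeneg.
  by move=> y _; exact: funeneg_ge0.
rewrite !integral_dirac //; [|exact: measurable_funeneg|exact: measurable_funepos].
rewrite diracE mem_set // !mul1e funeposE funenegE /=.
rewrite -!EFin_max -!EFinM -EFinB -mulrBr; congr (_%:E); congr (_ * _).
have [h|h] := leP 0 (f x).
  by rewrite max_r ?subr0 // oppr_le0.
by rewrite max_l ?sub0r ?opprK // oppr_ge0 ltW.
Qed.

Lemma unif_ub (X : set T) (P : nat -> MP) k :
  compact (@row_of_tuple R n @` X) ->
  exists M, forall i, (i < k)%N -> forall x, X x -> `|evalp (P i) x| <= M.
Proof.
move=> cK; elim: k => [|k [M HM]]; first by exists 0.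
have [M' HM'] := @bound_poly X (P k) cK.
exists (Num.max M M') => i; rewrite ltnS leq_eqVlt => /orP[/eqP->|ik] x Xx;
  rewrite le_max.
  by rewrite HM' // orbT.
by rewrite HM.
Qed.

Lemma unif_lb (X : set T) (Q : nat -> MP) t :
  compact (@row_of_tuple R n @` X) ->
  (forall i, (i < t)%N -> forall x, X x -> 0 < evalp (Q i) x) ->
  exists a, 0 < a /\ forall i, (i < t)%N -> forall x, X x -> a <= evalp (Q i) x.
Proof.
move=> cK Qpos.
suff : forall k, (k <= t)%N -> exists a, 0 < a /\
   forall i, (i < k)%N -> forall x, X x -> a <= evalp (Q i) x by apply.
elim => [|k IH] kt; first by exists 1.
have [a [a0 Ha]] := IH (ltnW kt).
have [a' [a'0 Ha']] := @lbound_poly X (Q k) cK (Qpos k kt).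
exists (Num.min a a'); split; first by rewrite lt_min a0 a'0.
move=> i; rewrite ltnS leq_eqVlt => /orP[/eqP->|ik] x Xx; rewrite ge_min.
  by rewrite Ha' // orbT.
by rewrite Ha.
Qed.

Definition Hpoly (b e : R) (N : nat) (P Q : MP) : MP :=
  multinomials.mpoly.mpolyC n (b^-1) * P *
  \sum_(k < N) (1 - multinomials.mpoly.mpolyC n (b^-1) * Q) ^+ k
  - multinomials.mpoly.mpolyC n e.

Lemma evalp_Hpoly b e N P Q x :
  evalp (Hpoly b e N P Q) x =
  b^-1 * evalp P x * \sum_(k < N) (1 - b^-1 * evalp Q x) ^+ k - e.
Proof.
rewrite /Hpoly /evalp multinomials.mpoly.mevalB !multinomials.mpoly.mevalM.
rewrite !multinomials.mpoly.mevalC.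
congr (_ * _ * _ - _).
rewrite (big_morph _ (multinomials.mpoly.mevalD _) (multinomials.mpoly.meval0 _)).
apply: eq_bigr => k _.
elim: (val k) => [|j IHj].
  by rewrite !expr0 multinomials.mpoly.meval1.
rewrite !exprS multinomials.mpoly.mevalM IHj; congr (_ * _).
by rewrite multinomials.mpoly.mevalB multinomials.mpoly.mevalM multinomials.mpoly.meval1 multinomials.mpoly.mevalC.
Qed.

Section Meas.
Variables (X : set T) (mX : measurable X)
  (cK : compact (@row_of_tuple R n @` X)).

Lemma poly_int (mu : {finite_measure set T -> \bar R}) (P : MP) :
  mu.-integrable X (EFin \o evalp P).
Proof.
apply: measurable_bounded_integrable => //.
- by rewrite ltey_eq fin_num_measure.
- by apply: (measurable_funS measurableT) => //; exact: measurable_evalp.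
- have [M HM] := @bound_poly X P cK.
  exists M; split; first exact: num_real.
  by move=> M' hM' x Xx /=; exact: (le_trans (HM x Xx) (ltW hM')).
Qed.

Lemma evalpX (m : multinomials.mpoly.multinom n) x :
  evalp (@multinomials.mpoly.mpolyX n R m) x =
  monom (fun i => multinomials.mpoly.fun_of_multinom m i) x.
Proof. by rewrite /evalp multinomials.mpoly.mevalX. Qed.

Lemma int_expand (mu : {finite_measure set T -> \bar R}) (H Q : MP) :
  (\int[mu]_(x in X) (evalp H x * evalp Q x)%:E =
  \sum_(m <- multinomials.mpoly.msupp H) (multinomials.mpoly.mcoeff m H)%:E *
     \int[mu]_(x in X) (monom (fun i => multinomials.mpoly.fun_of_multinom m i) x
                        * evalp Q x)%:E)%E.
Proof.
under eq_integral do rewrite evalpE mulr_suml -sumEFin.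
rewrite integral_sum //; last first.
  move=> m.
  have := poly_int mu (multinomials.mpoly.mpolyC n (multinomials.mpoly.mcoeff m H) *
       @multinomials.mpoly.mpolyX n R m * Q).
  apply: (eq_integrable mX) => x _.
  by rewrite /= !evalpM evalpX /evalp multinomials.mpoly.mevalC.
apply: eq_bigr => m _.
rewrite -(integralZl mX) //; last first.
  have := poly_int mu (@multinomials.mpoly.mpolyX n R m * Q).
  apply: (eq_integrable mX) => x _.
  by rewrite /= !evalpM evalpX.
by apply: eq_integral => x _; rewrite -EFinM mulrA.
Qed.

Lemma moment_poly (mu0 mu1 : {finite_measure set T -> \bar R}) (Q0 Q1 : MP) :
  (forall alpha : 'I_n -> nat,
    \int[mu1]_(x in X) (monom alpha x * evalp Q1 x)%:E =
    \int[mu0]_(x in X) (monom alpha x * evalp Q0 x)%:E)%E ->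
  forall H : MP,
  (\int[mu1]_(x in X) (evalp H x * evalp Q1 x)%:E =
   \int[mu0]_(x in X) (evalp H x * evalp Q0 x)%:E)%E.
Proof.
move=> Hm H; rewrite !int_expand; apply: eq_bigr => m _; by rewrite Hm.
Qed.

Lemma int_polyM (mu : {finite_measure set T -> \bar R}) (P Q : MP) :
  mu.-integrable X (fun x => (evalp P x * evalp Q x)%:E).
Proof.
have := poly_int mu (P * Q).
by apply: (eq_integrable mX) => x _; rewrite /= evalpM.
Qed.

Lemma certificate (t : nat) (mu : nat -> {finite_measure set T -> \bar R})
  (p q Hs : nat -> MP) (c : R) :
  (forall i, (0 < i < t)%N -> forall alpha : 'I_n -> nat,
    \int[mu i]_(x in X) (monom alpha x * evalp (q i) x)%:E =
    \int[mu 0%N]_(x in X) (monom alpha x * evalp (q 0%N) x)%:E)%E ->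
  (\int[mu 0%N]_(x in X) (evalp (q 0%N) x)%:E = 1)%E ->
  (forall x, X x -> 0 <= evalp (q 0%N) x) ->
  (forall i, (i < t)%N -> forall x, X x ->
     evalp (Hs i) x * evalp (q i) x <= evalp (p i) x) ->
  (forall x, X x -> c <= \sum_(i < t) evalp (Hs i) x) ->
  (c%:E <= \sum_(i < t) \int[mu i]_(x in X) (evalp (p i) x)%:E)%E.
Proof.
move=> Hmom Hq0 q0ge0 Hp Hc.
apply: (@le_trans _ _ (\sum_(i < t)
   \int[mu 0%N]_(x in X) (evalp (Hs i) x * evalp (q 0%N) x)%:E)%E).
  rewrite -(integral_sum mX); last by move=> i; exact: int_polyM.
  have -> : c%:E = (\int[mu 0%N]_(x in X) (c%:E * (evalp (q 0%N) x)%:E))%E.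
    by rewrite (integralZl mX) ?Hq0 ?mule1 //; exact: poly_int.
  apply: le_integral => //.
  - by apply: (integrableZl mX); exact: poly_int.
  - by apply: (integrable_sum mX) => i _; exact: int_polyM.
  move=> x /set_mem Xx.
  rewrite sumEFin -EFinM lee_fin -mulr_suml.
  by apply: ler_wpM2r; [exact: q0ge0 | exact: Hc].
apply: lee_sum => i _.
have E : (\int[mu i]_(x in X) (evalp (Hs i) x * evalp (q i) x)%:E =
  \int[mu 0%N]_(x in X) (evalp (Hs i) x * evalp (q 0%N) x)%:E)%E.
  have [->//|i0] := eqVneq (val i) 0%N.
  apply: moment_poly => alpha; apply: Hmom.
  by rewrite lt0n i0 ltn_ord.
rewrite -E; apply: le_integral => //.
- exact: int_polyM.
- exact: poly_int.
by move=> x /set_mem Xx; rewrite lee_fin; apply: Hp.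
Qed.

End Meas.

Lemma measurable_monom (alpha : 'I_n -> nat) : measurable_fun setT (@monom R n alpha).
Proof.
apply: measurable_prod => i _.
apply: measurable_funX; exact: measurable_tnth.
Qed.

Lemma main_thm (m t : nat) (g : 'I_m -> rpoly R n) (p q : nat -> rpoly R n) :
  (0 < t)%N ->
  compact (@row_of_tuple R n @` semialg g) ->
  (forall i, (i < t)%N -> forall x, semialg g x -> 0 < evalp (q i) x) ->
  let X := semialg g in
  let fmin : \bar R :=
    ereal_inf [set (\sum_(i < t) evalp (p i) x / evalp (q i) x)%:E | x in X] in
  let feasible : set (nat -> {finite_measure set (n.-tuple R) -> \bar R}) :=
    [set mu | (forall i, (i < t)%N -> mu i (~` X) = 0%E) /\
              (forall i, (0 < i < t)%N -> forall alpha : 'I_n -> nat,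
                 (\int[mu i]_(x in X) (monom alpha x * evalp (q i) x)%:E =
                  \int[mu 0%N]_(x in X) (monom alpha x * evalp (q 0%N) x)%:E)%E) /\
              (\int[mu 0%N]_(x in X) (evalp (q 0%N) x)%:E = 1)%E] in
  let fmeas : \bar R :=
    ereal_inf [set (\sum_(i < t) \int[mu i]_(x in X) (evalp (p i) x)%:E)%E
              | mu in feasible] in
  fmeas = fmin.
Proof.
move=> t0 cK qpos X fmin feasible fmeas.
have mX : measurable X := @measurable_semialg m g.
have mP (P : MP) : measurable_fun X (evalp P).
  by apply: (measurable_funS measurableT) => //; exact: measurable_evalp.
have mMQ alpha (P : MP) : measurable_fun X (fun y => monom alpha y * evalp P y).
  apply: (measurable_funS measurableT) => //.
  apply: measurable_funM; [exact: measurable_monom | exact: measurable_evalp].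
apply/eqP; rewrite eq_le; apply/andP; split.
- apply: le_ereal_inf_tmp => _ [x Xx <-].
  have w0 i : 0 <= `|evalp (q i) x|^-1 by rewrite invr_ge0.
  pose w i : {nonneg R} := NngNum (w0 i).
  pose mu : nat -> {finite_measure set T -> \bar R} := fun i => mscale (w i) \d_x.
  have wq i : (i < t)%N -> (w i)%:num * evalp (q i) x = 1.
    by move=> it; rewrite /= ger0_norm ?mulVf ?gt_eqF ?qpos // ltW // qpos.
  apply: ereal_inf_lbound; exists mu.
    split.
      move=> i it; rewrite /mu /= /mscale /= /dirac indicE memNset ?mule0 //=.
    split.
      move=> i /andP[i0 it] alpha.
      rewrite (int_scale_dirac _ _ _ _ mX Xx (mMQ alpha (q i))).
      rewrite (int_scale_dirac _ _ _ _ mX Xx (mMQ alpha (q 0%N))).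
      move: (wq i it) (wq 0%N t0).
      move: (w i) (w 0%N) => wi wz E1 E2.
      by rewrite mulrCA E1 mulrCA E2.
    rewrite (int_scale_dirac _ _ _ _ mX Xx (mP (q 0%N))).
    move: (wq 0%N t0); move: (w 0%N) => wz E2.
    by rewrite E2.
  rewrite -sumEFin; apply: eq_bigr => i _.
  rewrite (int_scale_dirac _ _ _ _ mX Xx (mP (p i))) /=.
  have qi0 : 0 < evalp (q i) x by apply: qpos.
  rewrite ger0_norm ?(ltW qi0) //.
  by rewrite mulrC.
- apply: le_ereal_inf_tmp => _ [mu [Hneg [Hmom Hq0]] <-].
  have [x0 Xx0] : exists x, X x.
    case: (pselect (exists x, X x)) => // hne.
    have X0 : X = set0.
      by apply/seteqP; split => // x Xx; apply: hne; exists x.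
    move: Hq0; rewrite X0 integral_set0 => /(congr1 fine) /= /eqP.
    by rewrite eq_sym oner_eq0.
  have hlb : forall x, X x ->
      (fmin <= (\sum_(i < t) evalp (p i) x / evalp (q i) x)%:E)%E.
    by move=> x Xx; apply: ereal_inf_lbound; exists x.
  clearbody fmin.
  case: fmin hlb => [c| |] hlb; last 2 first.
  - by have := hlb x0 Xx0; rewrite leye_eq.
  - exact: leNye.
  have Hc : forall x, X x -> c <= \sum_(i < t) evalp (p i) x / evalp (q i) x.
    by move=> x Xx; have := hlb x Xx; rewrite lee_fin.
  have [a [a0 Ha]] := @unif_lb X q t cK qpos.
  have [B HB] := @unif_ub X q t cK.
  have [M HM] := @unif_ub X p t cK.
  pose b := `|B| + 1.
  have qb : forall i, (i < t)%N -> forall x, X x -> evalp (q i) x <= b.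
    move=> i it x Xx; apply: (le_trans (ler_norm _)).
    apply: (le_trans (HB i it x Xx)); apply: (le_trans (ler_norm B)).
    by rewrite lerDl.
  have b0 : 0 < b by rewrite /b ltr_pwDr.
  have ab : a <= b := le_trans (Ha 0%N t0 x0 Xx0) (qb 0%N t0 x0 Xx0).
  have ba0 : 0 < b^-1 * a by rewrite mulr_gt0 // invr_gt0.
  have ba1 : b^-1 * a <= 1 by rewrite mulrC ler_pdivrMr // mul1r.
  pose rho := 1 - b^-1 * a.
  have rho0 : 0 <= rho by rewrite /rho subr_ge0.
  have rho1 : rho < 1 by rewrite /rho; lra.
  have Sfin : (\sum_(i < t) \int[mu i]_(x in X) (evalp (p i) x)%:E =
     (\sum_(i < t) fine (\int[mu i]_(x in X) (evalp (p i) x)%:E))%:E)%E.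
    rewrite -sumEFin; apply: eq_bigr => i _; rewrite fineK //.
    by have h := integrable_fin_num mX (poly_int X mX cK (mu i) (p i)); exact h.
  rewrite Sfin lee_fin.
  apply: (@limit_arg _ _ (2 * t%:R * M / a) rho rho0 rho1) => N.
  rewrite -lee_fin -Sfin.
  pose e := M * rho ^+ N / a.
  have -> : c - 2 * t%:R * M / a * rho ^+ N = c - t%:R * (2 * e).
    by rewrite /e; field; rewrite gt_eqF.
  apply: (@certificate X mX cK t mu p q (fun i => Hpoly b e N (p i) (q i))).
  - exact: Hmom.
  - exact: Hq0.
  - by move=> x Xx; apply: ltW; apply: qpos.
  - move=> i it x Xx; rewrite evalp_Hpoly.
    by have [] := approx_pt _ _ _ _ _ N a0 (Ha i it x Xx) (qb i it x Xx) (HM i it x Xx).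
  - move=> x Xx.
    apply: (@le_trans _ _ (\sum_(i < t) (evalp (p i) x / evalp (q i) x - 2 * e))).
      rewrite sumrB sumr_const card_ord.
      have E3 : 2 * e *+ t = t%:R * (2 * e) by rewrite -mulr_natl.
      have := Hc x Xx; rewrite E3; lra.
    apply: ler_sum => i _; rewrite evalp_Hpoly.
    by have [] := approx_pt _ _ _ _ _ N a0 (Ha i (ltn_ord i) x Xx) (qb i (ltn_ord i) x Xx) (HM i (ltn_ord i) x Xx).
Qed.

End A.

Theorem theorem3p6 (R : realType) (n m t : nat) (g : 'I_m -> rpoly R n)
    (p q : nat -> rpoly R n) :
  (0 < t)%N ->
  compact (@row_of_tuple R n @` semialg g) ->
  (forall i, (i < t)%N -> forall x, semialg g x -> 0 < evalp (q i) x) ->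
  let X := semialg g in
  let fmin : \bar R :=
    ereal_inf [set (\sum_(i < t) evalp (p i) x / evalp (q i) x)%:E | x in X] in
  let feasible : set (nat -> {finite_measure set (n.-tuple R) -> \bar R}) :=
    [set mu | (forall i, (i < t)%N -> mu i (~` X) = 0%E) /\
              (forall i, (0 < i < t)%N -> forall alpha : 'I_n -> nat,
                 (\int[mu i]_(x in X) (monom alpha x * evalp (q i) x)%:E =
                  \int[mu 0%N]_(x in X) (monom alpha x * evalp (q 0%N) x)%:E)%E) /\
              (\int[mu 0%N]_(x in X) (evalp (q 0%N) x)%:E = 1)%E] in
  let fmeas : \bar R :=
    ereal_inf [set (\sum_(i < t) \int[mu i]_(x in X) (evalp (p i) x)%:E)%E
              | mu in feasible] in
  fmeas = fmin.
Proof. exact: (@main_thm R n m t g p q). Qed.
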